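(* Let $\ell\ge 1$ and let $G$ be a cyclically $\ell$-edge-connected cubic graph with at least $2\ell+2$ vertices. Let $v_1v_2v_3v_4$ be a path in $G$ (on four distinct vertices), let $v_1'$ be the neighbor of $v_2$ different from $v_1$ and $v_3$, and let $v_4'$ be the neighbor of $v_3$ different from $v_2$ and $v_4$. Let $G'$ be the graph obtained from $G$ by splitting off the path $v_1v_2v_3v_4$. If $E(A',B')$ is a cyclic $\ell'$-edge-cut of $G'$ with $\ell'<\ell$, then $\ell'\ge \ell-2$, and neither the edge $v_1v_4$ nor the edge $v_1'v_4'$ belongs to $E(A',B')$.
   Context: Graphs may have parallel edges. For a partition $\{A,B\}$ of $V(G)$, $E(A,B)$ is the set of edges with one end in $A$ and the other in $B$; it is an $\ell$-edge-cut if it has exactly $\ell$ edges, and it is cyclic if both $G[A]$ and $G[B]$ contain a cycle. $G$ is cyclically $\ell$-edge-connected if it has no cyclic edge-cut of size less than $\ell$. Splitting off a path $v_1v_2v_3v_4$ in a cubic graph $G$: remove the vertices $v_2,v_3$ (with incident edges) and add the edges $v_1v_4$ and $v_1'v_4'$, where $v_1'$ is the neighbor of $v_2$ other than $v_1,v_3$ and $v_4'$ is the neighbor of $v_3$ other than $v_2,v_4$. *)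

(* Defs.v *)
From mathcomp Require Import all_boot.
Set Implicit Arguments. Unset Strict Implicit. Unset Printing Implicit Defensive.

(* A finite multigraph: vertex type, edge type, and the (unordered) pair of
   ends of each edge, given as an ordered pair.  A loop has equal ends. *)
Record mgraph := MGraph { gV : finType; gE : finType; gends : gE -> gV * gV }.

Section Graphs.
Variable G : mgraph.
Implicit Types (x y : gV G) (e : gE G) (A : {set gV G}).

Definition joins e x y : bool :=
  (gends e == (x, y)) || (gends e == (y, x)).

Definition adj x y : Prop := exists e, joins e x y.

(* degree: a loop counts twice *)
Definition deg x : nat :=
  #|[set e | (gends e).1 == x]| + #|[set e | (gends e).2 == x]|.

Definition cubic : Prop := forall x, deg x = 3.

(* G[A] contains a cycle: k+1 distinct vertices x_0..x_k in A and k+1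
   distinct edges e_0..e_k with e_i joining x_i and x_{i+1 mod (k+1)}.
   (k = 0: a loop; k = 1: two parallel edges.) *)
Definition has_cycle_in A : Prop :=
  exists (k : nat) (x : 'I_k.+1 -> gV G) (e : 'I_k.+1 -> gE G),
    injective x /\ injective e /\
    forall i, x i \in A /\ joins (e i) (x i) (x (ordS i)).

(* E(A, B) for the partition {A, B = V \ A} *)
Definition cut A : {set gE G} :=
  [set e | ((gends e).1 \in A) != ((gends e).2 \in A)].

Definition cyclic_cut A : Prop := has_cycle_in A /\ has_cycle_in (~: A).

Definition cyc_edge_conn (l : nat) : Prop :=
  forall A, cyclic_cut A -> l <= #|cut A|.

End Graphs.

Section SplitOff.
Variables (G : mgraph) (v1 v2 v3 v4 v1' v4' : gV G).

Definition keepV : pred (gV G) := fun v => (v != v2) && (v != v3).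
Definition keepE : pred (gE G) :=
  fun e => keepV (gends e).1 && keepV (gends e).2.

Lemma keepE1 (e : {e : gE G | keepE e}) : keepV (gends (val e)).1.
Proof. by case: e => e /= /andP []. Qed.
Lemma keepE2 (e : {e : gE G | keepE e}) : keepV (gends (val e)).2.
Proof. by case: e => e /= /andP []. Qed.

Definition so_V : finType := {v : gV G | keepV v}.
Definition so_E : finType := ({e : gE G | keepE e} + bool)%type.

Variables (h1 : keepV v1) (h4 : keepV v4) (h1' : keepV v1') (h4' : keepV v4').

(* inr true is the new edge v1v4, inr false the new edge v1'v4' *)
Definition so_ends (x : so_E) : so_V * so_V :=
  match x with
  | inl e => (exist _ (gends (val e)).1 (keepE1 e),
              exist _ (gends (val e)).2 (keepE2 e))
  | inr true => (exist _ v1 h1, exist _ v4 h4)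
  | inr false => (exist _ v1' h1', exist _ v4' h4')
  end.

Definition split_off : mgraph := MGraph so_ends.

Definition new_edge_v1v4 : gE split_off := inr true.
Definition new_edge_v1'v4' : gE split_off := inr false.

End SplitOff.

(* Main.v *)
Require Import Defs.
From mathcomp Require Import all_boot.
From Stdlib Require Import Lia Classical.
Set Implicit Arguments. Unset Strict Implicit. Unset Printing Implicit Defensive.

Ltac ssrlia := repeat match goal with H : is_true (_ <= _) |- _ => move/leP in H
  | H : is_true (_ == _) |- _ => move/eqP in H end;
  try (apply/leP); try (match goal with |- is_true (_ == _) => apply/eqP end);
  repeat match goal with H : context [addn] |- _ => rewrite -plusE in H
   | H : context [muln] |- _ => rewrite -multE in H
   | H : context [subn] |- _ => rewrite -minusE in H  end;
  rewrite -?plusE -?minusE -?multE; lia.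

Section Gen.
Variable G : mgraph.
Implicit Types (x y v z w : gV G) (g h : gE G) (X : {set gV G}) (D : {set gE G}).

Definition touches g v := ((gends g).1 == v) || ((gends g).2 == v).
Definition inside X : {set gE G} :=
  [set g | ((gends g).1 \in X) && ((gends g).2 \in X)].
Definition good D : Prop :=
  (exists g, g \in D) /\
  forall v, (exists2 g, g \in D & touches g v) ->
    (exists2 g, g \in D & joins g v v) \/
    (exists g1 g2, [/\ g1 \in D, g2 \in D, g1 != g2, touches g1 v & touches g2 v]).

Lemma joins_sym g x y : joins g x y = joins g y x.
Proof. by rewrite /joins orbC. Qed.

Lemma joins_touch g x y : joins g x y -> touches g x /\ touches g y.
Proof.
rewrite /joins /touches; case: (gends g) => a b /orP [] /eqP [-> ->];
  by rewrite !eqxx ?orbT.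
Qed.

Lemma joins_touchE g x y v : joins g x y -> touches g v -> v = x \/ v = y.
Proof.
rewrite /joins /touches; case: (gends g) => a b /orP [] /eqP [-> ->] /= /orP [] /eqP <-;
 by auto.
Qed.

Lemma joins_inside g x y X : joins g x y -> x \in X -> y \in X -> g \in inside X.
Proof.
rewrite /joins inE => /orP [] /eqP -> /= -> -> //.
Qed.

Lemma inside_ends g X x y : g \in inside X -> joins g x y -> (x \in X) && (y \in X).
Proof.
rewrite /joins inE => /andP [Ha Hb] /orP [] /eqP E; move: Ha Hb; rewrite E /= => -> -> //.
Qed.

Lemma joins_uniq g a b c d : joins g a b -> joins g c d ->
  (a = c /\ b = d) \/ (a = d /\ b = c).
Proof.
rewrite /joins; case: (gends g) => p q /orP [] /eqP [-> ->] /orP [] /eqP [-> ->]; by auto.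
Qed.

Definition other g z := if (gends g).1 == z then (gends g).2 else (gends g).1.

Lemma joins_other g z : touches g z -> joins g z (other g z).
Proof.
rewrite /touches /joins /other; case: (gends g) => a b /=.
case: eqP => [-> _|_ /= /eqP ->]; by rewrite eqxx ?orbT.
Qed.

Lemma cut_joins g x y X : joins g x y -> (g \in cut X) = ((x \in X) != (y \in X)).
Proof.
rewrite /joins inE => /orP [] /eqP -> //=.
by case: (x \in X); case: (y \in X).
Qed.

Lemma cut_setC X : cut (~: X) = cut X.
Proof.
apply/setP => g; rewrite !inE.
by case: ((gends g).1 \in X); case: ((gends g).2 \in X).
Qed.

Lemma cycle_good X : has_cycle_in X -> exists2 D : {set gE G}, D \subset inside X & good D.
Proof.
move=> [k [x [e [xi [ei H]]]]].
exists [set e i | i in 'I_k.+1].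
  apply/subsetP => g /imsetP [i _ ->].
  have [H1 H2] := H i.
  have [H3 _] := H (ordS i).
  exact: joins_inside H2 H1 H3.
split; first by exists (e ord0); apply: imset_f.
move=> v [g /imsetP [i _ ->] Ht].
have Hj : exists j, v = x j.
  have [_ H2] := H i; case: (joins_touchE H2 Ht) => ->; by eexists.
case: Hj => j ->.
have Hp := (H (ord_pred j)).2; rewrite ord_predK in Hp.
have Hq := (H j).2.
case: (eqVneq (ord_pred j) j) => Hjj.
  left; exists (e (ord_pred j)); first exact: imset_f.
  by move: Hp; rewrite Hjj.
right; exists (e j), (e (ord_pred j)); split.
- exact: imset_f.
- exact: imset_f.
- by apply/eqP => /ei E; move: Hjj; rewrite -E eqxx.
- exact: (joins_touch Hq).1.
- exact: (joins_touch Hp).2.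
Qed.


Fixpoint wpath D z (p : seq (gE G * gV G)) : bool :=
  if p is (g, y) :: p' then [&& g \in D, joins g z y & wpath D y p'] else true.

Lemma wpath_take D z p i : wpath D z p -> wpath D z (take i p).
Proof.
elim: p z i => [|[g y] p IH] z [|i] //= /and3P [-> -> /IH ->] //.
Qed.

Lemma wpath_nth D z p j g0 d : wpath D z p -> j < size p ->
  joins (nth g0 (map fst p) j) (nth d (z :: map snd p) j) (nth d (map snd p) j)
  && (nth g0 (map fst p) j \in D).
Proof.
elim: p z j => [|[g y] p IH] z [|j] //= /and3P [H1 H2 H3] Hj.
  by rewrite H1 H2.
exact: IH y j H3 Hj.
Qed.

Lemma wpath_notouch D y p z h : wpath D y p -> z \notin (y :: map snd p) ->
  h \in map fst p -> ~~ touches h z.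
Proof.
elim: p y => [|[g w] p IH] y //= /and3P [_ Hj Hw] Hz; rewrite inE => /orP [/eqP -> | Hh].
  apply/negP => /(joins_touchE Hj) [] E; move: Hz; rewrite !inE E eqxx ?orbT //.
apply: (IH w Hw _ Hh).
by move: Hz; rewrite !inE negb_or => /andP [_].
Qed.

Lemma close_cycle D X z q g : D \subset inside X -> wpath D z q ->
  uniq (z :: map snd q) -> uniq (rcons (map fst q) g) -> g \in D ->
  joins g (last z (map snd q)) z -> has_cycle_in X.
Proof.
move=> HDX Hw Hu1 Hu2 HgD Hgj.
pose k := size q.
exists k, (fun j : 'I_k.+1 => nth z (z :: map snd q) j),
  (fun j : 'I_k.+1 => nth g (rcons (map fst q) g) j).
have Hs1 : size (z :: map snd q) = k.+1 by rewrite /= size_map.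
have Hs2 : size (rcons (map fst q) g) = k.+1 by rewrite size_rcons size_map.
split.
  move=> i j /eqP; rewrite nth_uniq ?Hs1 //.
  by move/eqP/val_inj.
split.
  move=> i j /eqP; rewrite nth_uniq ?Hs2 //.
  by move/eqP/val_inj.
suff Hj : forall i : 'I_k.+1,
  joins (nth g (rcons (map fst q) g) i) (nth z (z :: map snd q) i) (nth z (z :: map snd q) (ordS i))
  && (nth g (rcons (map fst q) g) i \in D).
  move=> i; have /andP [Hj1 Hj2] := Hj i; split=> //.
  have := inside_ends (subsetP HDX _ Hj2) Hj1.
  by case/andP.
move=> i; rewrite nth_rcons size_map.
case: (ltnP i k) => Hik.
  have -> : nat_of_ord (ordS i) = i.+1 by rewrite /= modn_small.
  exact: wpath_nth.
have Eik : nat_of_ord i = k by apply/eqP; rewrite eqn_leq Hik -ltnS ltn_ord.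
have -> : nat_of_ord (ordS i) = 0 by rewrite /= Eik modnn.
rewrite Eik if_same HgD andbT /=.
by rewrite /k -(size_map snd) -last_nth.
Qed.

Lemma last_take (T : Type) (z : T) (s : seq T) (i : nat) : i <= size s ->
  last z (take i s) = nth z (z :: s) i.
Proof.
elim: s z i => [|a s IH] z i; first by case: i.
case: i => [//|i] /= Hi.
by rewrite IH // (set_nth_default z) //=.
Qed.

Lemma step D X z p : D \subset inside X -> good D -> wpath D z p ->
  uniq (z :: map snd p) -> uniq (map fst p) ->
  (p = [::] -> exists2 g, g \in D & touches g z) ->
  has_cycle_in X \/ exists g w, [/\ g \in D, joins g w z,
     w \notin (z :: map snd p) & g \notin map fst p].
Proof.
move=> HDX [_ Hgood] Hw Hu1 Hu2 Hst.
have hz : exists2 h, h \in D & touches h z.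
  case: p Hw Hst {Hu1 Hu2} => [|[h y] p'] Hw Hst; first exact: Hst.
  move: Hw => /= /and3P [HhD Hj _]; exists h => //; exact: (joins_touch Hj).1.
case: (Hgood z hz) => [[g HgD Hg]|[g1 [g2 [Hg1 Hg2 Hne Ht1 Ht2]]]].
  left; apply: (close_cycle (z:=z) (q:=[::]) (g:=g) HDX) => //.
have [g [HgD Hgz Hgh]] : exists g, [/\ g \in D, touches g z &
    forall h y p', p = (h, y) :: p' -> g != h].
  case: p {Hw Hu1 Hu2 Hst} => [|[h y] p']; first by exists g1.
  case: (eqVneq g1 h) => E.
    exists g2; split => // h' y' p'' [<- _ _]; by rewrite -E eq_sym.
  by exists g1; split => // h' y' p'' [<- _ _].
have Hgn : g \notin map fst p.
  case: p Hw Hu1 Hu2 Hst Hgh => [|[h y] p'] //= /and3P [_ _ Hw'] Hu1 _ _ Hgh.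
  rewrite inE negb_or (Hgh h y p' erefl) /=.
  apply/negP => Hin; move: Hu1 => /andP [Hz _].
  by have := wpath_notouch Hw' Hz Hin; rewrite Hgz.
have Hjw := joins_other Hgz.
set w := other g z in Hjw.
case Hwin : (w \in z :: map snd p); last first.
  by right; exists g, w; split => //; [rewrite joins_sym | rewrite Hwin].
left.
set i := index w (z :: map snd p).
have Hi : i <= size p.
  by rewrite -ltnS -(size_map snd) -/(size (z :: map snd p)) index_mem.
apply: (close_cycle (z:=z) (q:=take i p) (g:=g) HDX) => //.
- exact: wpath_take.
- rewrite map_take; have -> : z :: take i (map snd p) = take i.+1 (z :: map snd p) by []; exact: take_uniq.
- rewrite rcons_uniq map_take take_uniq // andbT.
  by apply/negP => /mem_take; apply/negP.
- rewrite map_take last_take ?size_map // nth_index //.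
  by rewrite joins_sym.
Qed.

Lemma walk D X : D \subset inside X -> good D ->
  forall n z p, #|gV G| - size p <= n -> wpath D z p -> uniq (z :: map snd p) ->
  uniq (map fst p) -> (p = [::] -> exists2 g, g \in D & touches g z) ->
  has_cycle_in X.
Proof.
move=> HDX Hg; elim=> [|n IH] z p Hn Hw Hu1 Hu2 Hst;
  (case: (step HDX Hg Hw Hu1 Hu2 Hst) => [//|[g [w [HgD Hj Hwn Hgn]]]]).
  have Hu : uniq (w :: z :: map snd p) by rewrite /= Hwn.
  have := card_uniqP Hu; have := max_card (mem (w :: z :: map snd p)).
  move=> H1 H2; rewrite H2 /= size_map in H1.
  move: Hn; rewrite leqn0 subn_eq0 => Hn.
  have := leq_trans H1 Hn; by rewrite ltnNge leqnSn.
apply: (IH w ((g, z) :: p)) => //=.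
- move: Hn; rewrite subnS; case: (#|gV G| - size p) => //.
- by rewrite HgD Hj Hw.
- by rewrite Hwn.
- by rewrite Hgn.
Qed.

Lemma good_cycle D X : D \subset inside X -> good D -> has_cycle_in X.
Proof.
move=> HDX Hg; have [[g HgD] _] := Hg.
apply: (walk HDX Hg (n := #|gV G|) (z := (gends g).1) (p := [::])) => //.
- by rewrite subn0.
- by move=> _; exists g => //; rewrite /touches eqxx.
Qed.


Lemma bad_vertex D : (exists g0, g0 \in D) -> ~ good D ->
  exists v h, [/\ h \in D, touches h v, ~ joins h v v &
     forall g, g \in D -> touches g v -> g = h].
Proof.
move=> Hne Hng.
have [v [Hv Hnl Hnt]] : exists v, [/\ exists2 g, g \in D & touches g v,
    ~ (exists2 g, g \in D & joins g v v) &
    ~ (exists g1 g2, [/\ g1 \in D, g2 \in D, g1 != g2, touches g1 v & touches g2 v])].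
  apply: NNPP => Hc; apply: Hng; split => // v Hv; apply: NNPP => H; apply: Hc.
  exists v; split; [exact: Hv | move=> Hl; apply: H; left; exact: Hl | move=> Ht; apply: H; right; exact: Ht].
case: Hv => h HhD Hhv; exists v, h; split => //.
  by move=> Hj; apply: Hnl; exists h.
move=> g HgD Hgv; apply/eqP; apply/negPn/negP => Hne'; apply: Hnt.
by exists g, h.
Qed.

Lemma forest n : forall X D, #|X| <= n -> D \subset inside X ->
  (forall D', D' \subset D -> ~ good D') -> #|D| < #|X| \/ D = set0.
Proof.
elim: n => [|n IH] X D Hn HDX Hng.
  case: (set_0Vmem D) => [->|[g0 Hg0]]; first by right.
  have [v [h [HhD Hhv Hnl Huniq]]] := bad_vertex (ex_intro _ g0 Hg0) (Hng D (subxx D)).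
  have Hjh := joins_other Hhv.
  have /andP [HvX HuX] := inside_ends (subsetP HDX _ HhD) Hjh.
  by move: Hn; rewrite leqn0 => /eqP/cards0_eq E; rewrite E inE in HvX.
case: (set_0Vmem D) => [->|[g0 Hg0]]; first by right.
left.
have [v [h [HhD Hhv Hnl Huniq]]] := bad_vertex (ex_intro _ g0 Hg0) (Hng D (subxx D)).
have Hjh := joins_other Hhv.
set u := other h v in Hjh.
have /andP [HvX HuX] := inside_ends (subsetP HDX _ HhD) Hjh.
have Huv : u != v.
  apply/negP => /eqP E; apply: Hnl; by rewrite -{2}E.
have HcX := cardsD1 v X; rewrite HvX in HcX.
have HcD := cardsD1 h D; rewrite HhD in HcD.
have HX' : #|X :\ v| <= n by move: Hn; rewrite HcX.
have HD' : D :\ h \subset inside (X :\ v).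
  apply/subsetP => g; rewrite !inE => /andP [Hgh HgD].
  have := subsetP HDX _ HgD; rewrite inE => /andP [H1 H2].
  have Hnt' : ~~ touches g v by apply/negP => /(Huniq _ HgD) E; rewrite E eqxx in Hgh.
  move: Hnt'; rewrite /touches negb_or => /andP [N1 N2].
  by rewrite H1 H2 N1 N2.
have Hng' : forall D', D' \subset D :\ h -> ~ good D'.
  move=> D' HD2; apply: Hng; apply: (subset_trans HD2); exact: subD1set.
case: (IH _ _ HX' HD' Hng') => [Hlt|E].
  by rewrite HcD HcX /=; ssrlia.
have Hu : 0 < #|X :\ v| by apply/card_gt0P; exists u; rewrite !inE Huv.
rewrite HcD HcX E cards0 /=; ssrlia.
Qed.

Lemma card_sum (T : finType) (A : {set T}) : #|A| = \sum_(x : T) (x \in A).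
Proof.
rewrite -sum1_card big_mkcond /=; apply: eq_bigr => x _.
by case: (x \in A).
Qed.

Lemma sum_fib (f : gE G -> gV G) X :
  \sum_(x in X) #|[set g | f g == x]| = #|[set g | f g \in X]|.
Proof.
rewrite -[RHS]sum1_card (partition_big f (mem X)) /=; last by move=> g; rewrite inE.
apply: eq_bigr => x Hx; rewrite -sum1_card; apply: eq_bigl => g.
rewrite !inE; case: eqP => [->|]; by rewrite ?Hx ?andbF.
Qed.

Lemma deg_sum X : \sum_(x in X) deg x = 2 * #|inside X| + #|cut X|.
Proof.
rewrite /deg big_split /= !sum_fib !card_sum mul2n -addnn -!big_split /=.
apply: eq_bigr => g _; rewrite !inE.
by case: ((gends g).1 \in X); case: ((gends g).2 \in X).
Qed.

Lemma cubic_count X : cubic G -> 3 * #|X| = 2 * #|inside X| + #|cut X|.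
Proof.
move=> Hc; rewrite -deg_sum (eq_bigr (fun _ => 3)) // sum_nat_const mulnC //.
Qed.

Lemma acyclic_cut X : cubic G -> (exists x, x \in X) ->
  (forall D, D \subset inside X -> ~ good D) -> #|X| + 2 <= #|cut X|.
Proof.
move=> Hc [x Hx] Hng.
have Hc3 := cubic_count X Hc.
have HX : 0 < #|X| by apply/card_gt0P; exists x.
have Hi : #|inside X| < #|X|.
  case: (forest (leqnn #|X|) (subxx (inside X)) (fun D HD => Hng D HD)) => // ->.
  by rewrite cards0.
ssrlia.
Qed.

End Gen.

Section Spec.
Variables (G : mgraph) (v1 v2 v3 v4 v1' v4' : gV G).
Hypothesis Hcub : cubic G.
Hypothesis Huniq : uniq [:: v1; v2; v3; v4].
Hypotheses (Hd1' : v1' != v1) (Hd4' : v4' != v4).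
Variables (h1 : (v1 != v2) && (v1 != v3)) (h4 : (v4 != v2) && (v4 != v3))
  (h1' : (v1' != v2) && (v1' != v3)) (h4' : (v4' != v2) && (v4' != v3)).
Variables (e12 e23 e34 e21 e34' : gE G).
Hypotheses (J12 : joins e12 v1 v2) (J23 : joins e23 v2 v3) (J34 : joins e34 v3 v4)
  (J21 : joins e21 v2 v1') (J34' : joins e34' v3 v4').

Notation G' := (split_off h1 h4 h1' h4').
Notation kE := (keepE v2 v3).
Notation kV := (keepV v2 v3).
Definition u1 : gV G' := exist _ v1 h1.
Definition u4 : gV G' := exist _ v4 h4.
Definition u1' : gV G' := exist _ v1' h1'.
Definition u4' : gV G' := exist _ v4' h4'.

Lemma vdis : v1 <> v2 /\ v1 <> v3 /\ v1 <> v4 /\ v2 <> v3 /\ v2 <> v4 /\ v3 <> v4 /\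
  v1' <> v1 /\ v1' <> v2 /\ v1' <> v3 /\ v4' <> v4 /\ v4' <> v2 /\ v4' <> v3.
Proof.
move: Huniq h1' h4' Hd1' Hd4'; rewrite /= !inE !negb_or.
move=> /and4P [/and3P [/eqP ? /eqP ? /eqP ?] /andP [/eqP ? /eqP ?] /eqP ? _].
move=> /andP [/eqP ? /eqP ?] /andP [/eqP ? /eqP ?] /eqP ? /eqP ?.
by do 11 (split; first done).
Qed.

Ltac vc := let H := fresh in
  case: vdis => [? [? [? [? [? [? [? [? [? [? [? ?]]]]]]]]]]]; congruence.

Lemma edge_neq (g g' : gE G) (a b c d : gV G) : joins g a b -> joins g' c d ->
  ~ (a = c /\ b = d) -> ~ (a = d /\ b = c) -> g <> g'.
Proof. move=> Hg Hg' N1 N2 E; subst g'; by case: (joins_uniq Hg Hg'). Qed.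

Ltac eneq := match goal with
 |- ?g <> ?g' =>
   match goal with A : is_true (joins g _ _) |- _ => match goal with B : is_true (joins g' _ _) |- _ =>
     apply: (edge_neq A B) => -[? ?]; vc end end end.

Lemma edis : e12 <> e23 /\ e12 <> e34 /\ e12 <> e21 /\ e12 <> e34' /\ e23 <> e34 /\
  e23 <> e21 /\ e23 <> e34' /\ e34 <> e21 /\ e34 <> e34' /\ e21 <> e34'.
Proof. by do 9 (split; first eneq); eneq. Qed.

Ltac ec := case: edis => [? [? [? [? [? [? [? [? [? ?]]]]]]]]]; congruence.

Lemma five_uniq : uniq [:: e12; e23; e34; e21; e34'].
Proof.
rewrite /= !inE !negb_or !andbT; repeat (apply/andP; split); apply/eqP => E; ec.
Qed.

Lemma touch_notkeep (g : gE G) (v : gV G) : touches g v -> (v = v2 \/ v = v3) -> ~~ kE g.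
Proof.
move=> Ht Hv; rewrite /keepE /keepV; case/orP: Ht => /eqP ->; case: Hv => ->;
  by rewrite eqxx ?andbF.
Qed.

Lemma five_notkeep (g : gE G) : g \in [:: e12; e23; e34; e21; e34'] -> ~~ kE g.
Proof.
rewrite !inE => /orP [/eqP->|/orP [/eqP->|/orP [/eqP->|/orP [/eqP->|/eqP->]]]].
- apply: (touch_notkeep (v := v2)); [exact: (joins_touch J12).2|by left].
- apply: (touch_notkeep (v := v2)); [exact: (joins_touch J23).1|by left].
- apply: (touch_notkeep (v := v3)); [exact: (joins_touch J34).1|by right].
- apply: (touch_notkeep (v := v2)); [exact: (joins_touch J21).1|by left].
- apply: (touch_notkeep (v := v3)); [exact: (joins_touch J34').1|by right].
Qed.

Lemma touch_set (v : gV G) : [set e | touches e v] = [set e | (gends e).1 == v] :|: [set e | (gends e).2 == v].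
Proof. by apply/setP => e; rewrite !inE. Qed.

Lemma incident (v a b c : gV G) (g ga gb gc : gE G) : deg v = 3 ->
  joins ga v a -> joins gb v b -> joins gc v c ->
  ga <> gb -> ga <> gc -> gb <> gc -> touches g v -> g \in [:: ga; gb; gc].
Proof.
move=> Hd Ha Hb Hc N1 N2 N3 Hg; apply/negPn/negP => Hn.
have Hu : uniq [:: g; ga; gb; gc].
  move: Hn; rewrite /= !inE !negb_or !andbT => /and3P [-> -> ->] /=.
  by repeat (apply/andP; split); apply/eqP => E; congruence.
have Hs : {subset [:: g; ga; gb; gc] <= [set e | touches e v]}.
  move=> x; rewrite !inE => /orP [/eqP->|/orP [/eqP->|/orP [/eqP->|/eqP->]]] //.
  - exact: (joins_touch Ha).1.
  - exact: (joins_touch Hb).1.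
  - exact: (joins_touch Hc).1.
have H1 : #|[:: g; ga; gb; gc]| <= #|[set e | touches e v]|.
  apply: subset_leq_card; apply/subsetP => x; exact: Hs.
have H2 : #|[set e | touches e v]| <= deg v.
  rewrite touch_set cardsU /deg; exact: leq_subr.
move: H1 H2; rewrite Hd (card_uniqP Hu) /= => H1 H2.
have := leq_trans H1 H2; by [].
Qed.

Lemma notkeep_five (g : gE G) : ~~ kE g -> g \in [:: e12; e23; e34; e21; e34'].
Proof.
rewrite /keepE /keepV !negb_and !negbK => H.
have [Ht2|Ht3] : touches g v2 \/ touches g v3.
  move/orP: H => [/orP [E|E]|/orP [E|E]]; [left|right|left|right];
  by rewrite /touches E ?orbT.
- have J12' : joins e12 v2 v1 by rewrite joins_sym.
  case: edis => [? [? [? [? [? [? [? [? [? ?]]]]]]]]].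
  have := incident (Hcub v2) J12' J23 J21 _ _ _ Ht2.
  rewrite !inE => H2.
  have {H2} : [|| g == e12, g == e23 | g == e21] by apply: H2 => //; congruence.
  move/orP => [->|/orP [->|->]]; by rewrite ?orbT.
- have J23' : joins e23 v3 v2 by rewrite joins_sym.
  case: edis => [? [? [? [? [? [? [? [? [? ?]]]]]]]]].
  have := incident (Hcub v3) J23' J34 J34' _ _ _ Ht3.
  rewrite !inE => H2.
  have {H2} : [|| g == e23, g == e34 | g == e34'] by apply: H2 => //; congruence.
  move/orP => [->|/orP [->|->]]; by rewrite ?orbT.
Qed.


Definition liftS (S : {set gV G'}) (b2 b3 : bool) : {set gV G} :=
  [set v | ((v == v2) && b2) || ((v == v3) && b3) || (v \in [set val u | u in S])].

Lemma notval (S : {set gV G'}) v : ~~ kV v -> v \notin [set val u | u in S].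
Proof.
move=> Hk; apply/imsetP => -[u _ E]; move: Hk; rewrite E.
by have := valP u => /= ->.
Qed.

Lemma liftS_val S b2 b3 (u : gV G') : (val u \in liftS S b2 b3) = (u \in S).
Proof.
have /andP [N2 N3] := valP u.
by rewrite inE (negbTE N2) (negbTE N3) /= mem_imset //; apply: val_inj.
Qed.

Lemma liftS_v2 S b2 b3 : (v2 \in liftS S b2 b3) = b2.
Proof.
have N23 : v2 != v3 by apply/eqP; vc.
rewrite inE eqxx (negbTE N23) /= (negbTE (notval S _)) ?orbF //.
by rewrite /keepV eqxx.
Qed.

Lemma liftS_v3 S b2 b3 : (v3 \in liftS S b2 b3) = b3.
Proof.
have N23 : v3 != v2 by apply/eqP; vc.
rewrite inE eqxx (negbTE N23) /= (negbTE (notval S _)) ?orbF //.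
by rewrite /keepV eqxx andbF.
Qed.

Lemma keep_cases v : kV v \/ v = v2 \/ v = v3.
Proof.
rewrite /keepV; case: (eqVneq v v2) => [->|N2]; first by auto.
case: (eqVneq v v3) => [->|N3]; by auto.
Qed.

Lemma liftSC S b2 b3 : ~: liftS S b2 b3 = liftS (~: S) (~~ b2) (~~ b3).
Proof.
apply/setP => v; case: (keep_cases v) => [Hk|[->|->]].
- have -> : v = val (exist _ v Hk : gV G') by [].
  by rewrite in_setC !liftS_val in_setC.
- by rewrite in_setC !liftS_v2.
- by rewrite in_setC !liftS_v3.
Qed.

Lemma liftS00 S : liftS S false false = [set val u | u in S].
Proof. by apply/setP => v; rewrite inE !andbF. Qed.

Lemma card_liftS00 S : #|liftS S false false| = #|S|.
Proof. by rewrite liftS00 card_imset //; apply: val_inj. Qed.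

Definition mS (S : {set gV G'}) : nat :=
  #|[set x : gE G' | if x is inl _ then x \in cut S else false]|.

Lemma inl_inj (A B : Type) : injective (@inl A B).
Proof. by move=> a b []. Qed.

Lemma cut_inl S b2 b3 (e : {e : gE G | kE e}) :
  ((inl e : gE G') \in cut S) = (val e \in cut (liftS S b2 b3)).
Proof.
have E1 := liftS_val S b2 b3 (exist _ (gends (val e)).1 (keepE1 e) : gV G').
have E2 := liftS_val S b2 b3 (exist _ (gends (val e)).2 (keepE2 e) : gV G').
rewrite [in RHS]in_set /= E1 E2 [in LHS]in_set //.
Qed.

Lemma cutG S b2 b3 : #|cut (liftS S b2 b3)| = mS S +
  ((u1 \in S) != b2) + ((b2 != b3) + ((b3 != (u4 \in S)) + ((b2 != (u1' \in S)) + ((b3 != (u4' \in S)) + 0)))).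
Proof.
set X := liftS S b2 b3.
rewrite -(cardsID [set g | kE g] (cut X)) -addnA; congr (_ + _).
  have -> : cut X :&: [set g | kE g] = [set val e | e in [set e : {e : gE G | kE e} | val e \in cut X]].
    apply/setP => g; rewrite !inE; case: (boolP (kE g)) => Hk.
      have -> : g = val (exist _ g Hk : {e : gE G | kE e}) by [].
      by rewrite andbT mem_imset ?inE //; apply: val_inj.
    rewrite andbF; apply/esym/negbTE/imsetP => -[e _ E]; move: Hk; by rewrite E (valP e).
  rewrite /mS.
  have -> : [set x : gE G' | if x is inl _ then x \in cut S else false] =
      [set inl e | e in [set e : {e : gE G | kE e} | val e \in cut X]].
    apply/setP => x; rewrite inE; case: x => [e|b].
      rewrite mem_imset; last exact: inl_inj.
      rewrite [in RHS]in_set; exact: cut_inl.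
    by symmetry; apply/negbTE/imsetP => -[e _].
  by rewrite !card_imset //; [apply: inl_inj | apply: val_inj].
have -> : cut X :\: [set g | kE g] =
    [set g in [seq g <- [:: e12; e23; e34; e21; e34'] | g \in cut X]].
  apply/setP => g; rewrite in_setD [g \in [set g | kE g]]in_set [in RHS]in_set mem_filter.
  case: (boolP (kE g)) => Hk /=.
    symmetry; apply/negbTE/negP => /andP [_ /five_notkeep]; by rewrite Hk.
  by rewrite (notkeep_five Hk) andbT.
rewrite cardsE (card_uniqP (filter_uniq _ five_uniq)) size_filter /=.
rewrite (cut_joins _ J12) (cut_joins _ J23) (cut_joins _ J34) (cut_joins _ J21) (cut_joins _ J34').
have -> : v1 = val u1 by [].
have -> : v4 = val u4 by [].
have -> : v1' = val u1' by [].
have -> : v4' = val u4' by [].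
by rewrite !liftS_val /X liftS_v2 liftS_v3.
Qed.

Lemma cutG' (S : {set gV G'}) : #|cut S| = mS S +
  (((u1 \in S) != (u4 \in S)) + (((u1' \in S) != (u4' \in S)) + 0)).
Proof.
rewrite -(cardsID [set x : gE G' | if x is inl _ then true else false] (cut S)).
congr (_ + _).
  rewrite /mS; apply: eq_card => x.
  rewrite in_setI [in RHS]in_set [x \in [set x | _]]in_set; case: x => [e|b]; by rewrite ?andbT ?andbF.
have -> : cut S :\: [set x : gE G' | if x is inl _ then true else false] =
    [set x in [seq x <- [:: inr true; inr false] | x \in cut S]].
  apply/setP => x; rewrite in_setD [x \in [set x | _]]in_set [in RHS]in_set mem_filter.
  case: x => [e|[]] /=; by rewrite ?andbF ?andbT.
rewrite cardsE (card_uniqP _) ?size_filter; first by rewrite /= !in_set. by rewrite filter_uniq.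
Qed.


Lemma joinsE (H : mgraph) (g : gE H) a b : joins g a b =
  ((gends g).1 == a) && ((gends g).2 == b) || ((gends g).1 == b) && ((gends g).2 == a).
Proof. by rewrite /joins; case: (gends g) => x y; rewrite !xpair_eqE. Qed.

Lemma touches_inl (e : {e : gE G | kE e}) (u : gV G') :
  touches (inl e : gE G') u = touches (val e) (val u).
Proof. by rewrite /touches /= -!val_eqE. Qed.

Lemma touches_t (u : gV G') : touches (inr true : gE G') u = (v1 == val u) || (v4 == val u).
Proof. by rewrite /touches /= -!val_eqE. Qed.

Lemma touches_f (u : gV G') : touches (inr false : gE G') u = (v1' == val u) || (v4' == val u).
Proof. by rewrite /touches /= -!val_eqE. Qed.

Lemma joins_inl (e : {e : gE G | kE e}) (u w : gV G') :
  joins (inl e : gE G') u w = joins (val e) (val u) (val w).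
Proof. by rewrite !joinsE /= -!val_eqE. Qed.

Lemma joins_t (u w : gV G') : joins (inr true : gE G') u w =
  (v1 == val u) && (v4 == val w) || (v1 == val w) && (v4 == val u).
Proof. by rewrite !joinsE /= -!val_eqE. Qed.

Lemma joins_f (u w : gV G') : joins (inr false : gE G') u w =
  (v1' == val u) && (v4' == val w) || (v1' == val w) && (v4' == val u).
Proof. by rewrite !joinsE /= -!val_eqE. Qed.

Lemma inside_inl S (e : {e : gE G | kE e}) b2 b3 :
  ((inl e : gE G') \in inside S) = (val e \in inside (liftS S b2 b3)).
Proof.
have E1 := liftS_val S b2 b3 (exist _ (gends (val e)).1 (keepE1 e) : gV G').
have E2 := liftS_val S b2 b3 (exist _ (gends (val e)).2 (keepE2 e) : gV G').
rewrite [in RHS]in_set /= E1 E2 [in LHS]in_set //.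
Qed.

Lemma inside_t S : ((inr true : gE G') \in inside S) = (u1 \in S) && (u4 \in S).
Proof. by rewrite in_set. Qed.

Lemma inside_f S : ((inr false : gE G') \in inside S) = (u1' \in S) && (u4' \in S).
Proof. by rewrite in_set. Qed.

Definition liftD (D' : {set gE G'}) : {set gE G} :=
  [set val e | e in [set e : {e : gE G | kE e} | (inl e : gE G') \in D']] :|:
  ((if inr true \in D' then [set e12; e23; e34] else set0) :|:
   (if inr false \in D' then [set e21; e23; e34'] else set0)).

Lemma liftD_val (D' : {set gE G'}) (e : {e : gE G | kE e}) : (val e \in liftD D') = ((inl e : gE G') \in D').
Proof.
rewrite !in_setU mem_imset; last exact: val_inj.
rewrite in_set.
have Hk : (val e \in [:: e12; e23; e34; e21; e34']) = false.
  by apply/negbTE/negP => /five_notkeep; rewrite (valP e).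
have N1 : (val e \in [set e12; e23; e34]) = false.
  move: Hk; rewrite !inE; case: (val e == e12); case: (val e == e23); by case: (val e == e34).
have N2 : (val e \in [set e21; e23; e34']) = false.
  move: Hk; rewrite !inE; case: (val e == e21); case: (val e == e23); case: (val e == e34');
  by rewrite ?orbT.
by case: (inr true \in D'); case: (inr false \in D'); rewrite ?N1 ?N2 ?in_set0 ?orbF.
Qed.

Lemma liftD_t (D' : {set gE G'}) g : inr true \in D' -> g \in [:: e12; e23; e34] -> g \in liftD D'.
Proof. by move=> Ht Hg; rewrite !in_setU Ht; move: Hg; rewrite !inE => /orP [->|/orP [->|->]]; rewrite ?orbT. Qed.

Lemma liftD_f (D' : {set gE G'}) g : inr false \in D' -> g \in [:: e21; e23; e34'] -> g \in liftD D'.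
Proof. by move=> Ht Hg; rewrite !in_setU Ht; move: Hg; rewrite !inE => /orP [->|/orP [->|->]]; rewrite ?orbT. Qed.

Lemma liftD_cases (D' : {set gE G'}) g : g \in liftD D' ->
  (exists2 e : {e : gE G | kE e}, g = val e & (inl e : gE G') \in D') \/
  (inr true \in D' /\ g \in [:: e12; e23; e34]) \/
  (inr false \in D' /\ g \in [:: e21; e23; e34']).
Proof.
rewrite !in_setU => /orP [/imsetP [e He ->]|/orP [H|H]].
- by left; exists e => //; move: He; rewrite in_set.
- right; left; move: H; case: (inr true \in D'); rewrite ?in_set0 //.
  by rewrite !inE => /orP [/orP [->|->]|->]; rewrite ?orbT.
- right; right; move: H; case: (inr false \in D'); rewrite ?in_set0 //.
  by rewrite !inE => /orP [/orP [->|->]|->]; rewrite ?orbT.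
Qed.


Lemma in3 (T : eqType) (g a b c : T) : g \in [:: a; b; c] -> [\/ g = a, g = b | g = c].
Proof. by rewrite !inE => /orP [/eqP->|/orP [/eqP->|/eqP->]]; [apply: Or31|apply: Or32|apply: Or33]. Qed.

Lemma lv1 S b2 b3 : (v1 \in liftS S b2 b3) = (u1 \in S). Proof. exact: (liftS_val S b2 b3 u1). Qed.
Lemma lv4 S b2 b3 : (v4 \in liftS S b2 b3) = (u4 \in S). Proof. exact: (liftS_val S b2 b3 u4). Qed.
Lemma lv1' S b2 b3 : (v1' \in liftS S b2 b3) = (u1' \in S). Proof. exact: (liftS_val S b2 b3 u1'). Qed.
Lemma lv4' S b2 b3 : (v4' \in liftS S b2 b3) = (u4' \in S). Proof. exact: (liftS_val S b2 b3 u4'). Qed.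

Lemma liftD_inside S b2 b3 (D' : {set gE G'}) : D' \subset inside S ->
  ((inr true \in D') || (inr false \in D') -> b2 && b3) ->
  liftD D' \subset inside (liftS S b2 b3).
Proof.
move=> HDS Hb; apply/subsetP => g /liftD_cases [[e -> He]|[[Ht Hg]|[Hf Hg]]].
- by rewrite -inside_inl; apply: (subsetP HDS).
- have /andP [B2 B3] : b2 && b3 by apply: Hb; rewrite Ht.
  have := subsetP HDS _ Ht; rewrite inside_t => /andP [S1 S4].
  have X1 : v1 \in liftS S b2 b3 by rewrite lv1.
  have X4 : v4 \in liftS S b2 b3 by rewrite lv4.
  have X2 : v2 \in liftS S b2 b3 by rewrite liftS_v2.
  have X3 : v3 \in liftS S b2 b3 by rewrite liftS_v3.
  case: (in3 Hg) => ->; apply: joins_inside; eauto.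
- have /andP [B2 B3] : b2 && b3 by apply: Hb; rewrite Hf orbT.
  have := subsetP HDS _ Hf; rewrite inside_f => /andP [S1 S4].
  have X1 : v1' \in liftS S b2 b3 by rewrite lv1'.
  have X4 : v4' \in liftS S b2 b3 by rewrite lv4'.
  have X2 : v2 \in liftS S b2 b3 by rewrite liftS_v2.
  have X3 : v3 \in liftS S b2 b3 by rewrite liftS_v3.
  case: (in3 Hg) => ->; apply: joins_inside; eauto.
Qed.

Lemma liftD_good (D' : {set gE G'}) : good D' -> good (liftD D').
Proof.
move=> [[x0 Hx0] Hg'].
have T12 := joins_touch J12; have T23 := joins_touch J23; have T34 := joins_touch J34.
have T21 := joins_touch J21; have T34' := joins_touch J34'.
split.
  case: x0 Hx0 => [e|[]] H.
  - by exists (val e); rewrite liftD_val.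
  - by exists e12; apply: liftD_t; rewrite ?inE ?eqxx.
  - by exists e21; apply: liftD_f; rewrite ?inE ?eqxx.
move=> v [g Hg Hgv].
have Nk : forall e : {e : gE G | kE e}, touches (val e) v -> kV v.
  move=> e Ht; case: (keep_cases v) => [//|Hv].
  by have := touch_notkeep Ht Hv; rewrite (valP e).
case: (keep_cases v) => [Hk|[Ev|Ev]]; last first.
- (* v = v3 *)
  case: (liftD_cases Hg) => [[e Ee He]|[[Ht _]|[Hf _]]].
  + have := Nk e; rewrite -Ee => /(_ Hgv); rewrite Ev /keepV eqxx andbF //.
  + right; exists e23, e34; rewrite Ev; split; try (apply: liftD_t; by rewrite ?inE ?eqxx ?orbT);
      try by [case: T23 | case: T34].
    by apply/eqP; ec.
  + right; exists e23, e34'; rewrite Ev; split; try (apply: liftD_f; by rewrite ?inE ?eqxx ?orbT);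
      try by [case: T23 | case: T34'].
    by apply/eqP; ec.
- (* v = v2 *)
  case: (liftD_cases Hg) => [[e Ee He]|[[Ht _]|[Hf _]]].
  + have := Nk e; rewrite -Ee => /(_ Hgv); rewrite Ev /keepV eqxx //.
  + right; exists e12, e23; rewrite Ev; split; try (apply: liftD_t; by rewrite ?inE ?eqxx ?orbT);
      try by [case: T12 | case: T23].
    by apply/eqP; ec.
  + right; exists e21, e23; rewrite Ev; split; try (apply: liftD_f; by rewrite ?inE ?eqxx ?orbT);
      try by [case: T21 | case: T23].
    by apply/eqP; ec.
(* v kept *)
pose u : gV G' := exist _ v Hk.
have Hvu : val u = v by [].
have Hu : exists2 x, x \in D' & touches x u.
  case: (liftD_cases Hg) => [[e Ee He]|[[Ht Hgm]|[Hf Hgm]]].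
  + by exists (inl e) => //; rewrite touches_inl -Ee.
  + exists (inr true) => //; rewrite touches_t Hvu.
    case: (in3 Hgm) => E; subst g.
    * case: (joins_touchE J12 Hgv) => E; first by rewrite E eqxx.
      by have := Hk; rewrite E /keepV eqxx.
    * case: (joins_touchE J23 Hgv) => E; by have := Hk; rewrite E /keepV eqxx ?andbF.
    * case: (joins_touchE J34 Hgv) => E; last by rewrite E eqxx orbT.
      by have := Hk; rewrite E /keepV eqxx andbF.
  + exists (inr false) => //; rewrite touches_f Hvu.
    case: (in3 Hgm) => E; subst g.
    * case: (joins_touchE J21 Hgv) => E; last by rewrite E eqxx.
      by have := Hk; rewrite E /keepV eqxx.
    * case: (joins_touchE J23 Hgv) => E; by have := Hk; rewrite E /keepV eqxx ?andbF.
    * case: (joins_touchE J34' Hgv) => E; last by rewrite E eqxx orbT.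
      by have := Hk; rewrite E /keepV eqxx andbF.
case: (Hg' u Hu) => [[x Hx Hxl]|[x [y [Hx Hy Hxy Htx Hty]]]].
  case: x Hx Hxl => [e|[]] Hx Hxl.
  - by left; exists (val e); rewrite ?liftD_val // -joins_inl.
  - move: Hxl; rewrite joins_t Hvu orbb => /andP [/eqP E1 /eqP E4]; vc.
  - move: Hxl; rewrite joins_f Hvu orbb => /andP [/eqP E1 /eqP E4].
    right; exists e21, e34'; split.
    + by apply: liftD_f; rewrite ?inE ?eqxx.
    + by apply: liftD_f; rewrite ?inE ?eqxx ?orbT.
    + by apply/eqP; ec.
    + by rewrite -E1; case: T21.
    + by rewrite -E4; case: T34'.
right.
pose psi (x : gE G') : gE G := match x with
  | inl e => val e
  | inr true => if v == v1 then e12 else e34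
  | inr false => if v == v1' then e21 else e34' end.
have Hpsi : forall x, x \in D' -> touches x u -> psi x \in liftD D' /\ touches (psi x) v.
  move=> [e|[]] Hxx Htx'.
  - by rewrite /= liftD_val -Hvu -touches_inl.
  - move: Htx'; rewrite touches_t Hvu /psi => H.
    case: ifP => [/eqP E|N]; split; try (apply: liftD_t; by rewrite ?inE ?eqxx ?orbT).
    + by rewrite E; case: T12.
    + move: H; rewrite eq_sym N /= => /eqP <-; by case: T34.
  - move: Htx'; rewrite touches_f Hvu /psi => H.
    case: ifP => [/eqP E|N]; split; try (apply: liftD_f; by rewrite ?inE ?eqxx ?orbT).
    + by rewrite E; case: T21.
    + move: H; rewrite eq_sym N /= => /eqP <-; by case: T34'.
have Hfive : forall b, ~~ kE (psi (inr b)).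
  move=> [] /=; case: ifP => _; apply: five_notkeep; by rewrite !inE eqxx ?orbT.
have Hinj : forall x y, x != y -> psi x != psi y.
  move=> [a|b] [c|d] Nxy.
  - apply/eqP => E; move: Nxy; by rewrite (val_inj E) eqxx.
  - apply/eqP => E; have := Hfive d; by rewrite -E /= (valP a).
  - apply/eqP => E; have := Hfive b; by rewrite E /= (valP c).
  - case: b d Nxy => [] [] //= _; (case: ifP => _; case: ifP => _); apply/eqP; ec.
have [Px Tx] := Hpsi x Hx Htx.
have [Py Ty] := Hpsi y Hy Hty.
exists (psi x), (psi y); split => //; exact: Hinj.
Qed.

Lemma lift_cycle S b2 b3 (D' : {set gE G'}) : D' \subset inside S -> good D' ->
  ((inr true \in D') || (inr false \in D') -> b2 && b3) -> has_cycle_in (liftS S b2 b3).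
Proof.
move=> HDS Hg Hb; apply: (good_cycle (D := liftD D')).
- exact: liftD_inside.
- exact: liftD_good.
Qed.


Lemma liftS00_keep S v : v \in liftS S false false -> kV v.
Proof. by rewrite liftS00 => /imsetP [u _ ->]; exact: valP. Qed.

Lemma proj_good S (D : {set gE G}) : D \subset inside (liftS S false false) -> good D ->
  exists2 D' : {set gE G'}, D' \subset inside S &
    [/\ good D', inr true \notin D' & inr false \notin D'].
Proof.
move=> HDX [[g0 Hg0] Hg].
have Hk : forall g, g \in D -> kE g.
  move=> g HgD; have := subsetP HDX _ HgD; rewrite in_set => /andP [A B].
  by rewrite /keepE (liftS00_keep A) (liftS00_keep B).
exists [set inl e | e in [set e : {e : gE G | kE e} | val e \in D]].
  apply/subsetP => x /imsetP [e He ->]; rewrite (inside_inl S e false false).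
  by apply: (subsetP HDX); move: He; rewrite in_set.
have Hmem : forall g (H : kE g), ((inl (exist _ g H) : gE G') \in
    [set inl e | e in [set e : {e : gE G | kE e} | val e \in D]]) = (g \in D).
  move=> g H; rewrite mem_imset; last exact: inl_inj.
  by rewrite in_set.
split.
- split; first by exists (inl (exist _ g0 (Hk _ Hg0))); rewrite Hmem.
  move=> u [x /imsetP [e He ->] Hxu].
  move: He; rewrite in_set => He.
  rewrite touches_inl in Hxu.
  case: (Hg (val u)) => [|[g HgD Hgl]|[g1 [g2 [H1 H2 Hne T1 T2]]]].
  + by exists (val e).
  + left; exists (inl (exist _ g (Hk _ HgD))); first by rewrite Hmem.
    by rewrite joins_inl.
  + right; exists (inl (exist _ g1 (Hk _ H1))), (inl (exist _ g2 (Hk _ H2))); split.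
    * by rewrite Hmem.
    * by rewrite Hmem.
    * apply/eqP => -[E]; by rewrite E eqxx in Hne.
    * by rewrite touches_inl.
    * by rewrite touches_inl.
- by apply/imsetP => -[e _].
- by apply/imsetP => -[e _].
Qed.

Lemma count_side S : has_cycle_in S ->
  ~ (exists2 D' : {set gE G'}, D' \subset inside S &
      [/\ good D', inr true \notin D' & inr false \notin D']) ->
  #|S| + 2 <= #|cut (liftS S false false)|.
Proof.
move=> [k [x [e [_ [_ Hx]]]]] Hn.
rewrite -card_liftS00; apply: acyclic_cut Hcub _ _.
  by exists (val (x ord0)); rewrite liftS_val; case: (Hx ord0).
move=> D HD Hg; apply: Hn; exact: (proj_good HD Hg).
Qed.


Lemma card_G' : #|gV G'| + 2 = #|gV G|.
Proof.
have N23 : v2 != v3 by apply/eqP; vc.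
rewrite -(cardsC [set v2; v3]) cards2 N23 addnC; congr (_ + _).
rewrite /= card_sig; apply: eq_card => v; rewrite !inE /keepV negb_or.
by [].
Qed.

Lemma mS_C (S : {set gV G'}) : mS (~: S) = mS S.
Proof. by rewrite /mS cut_setC. Qed.

Lemma final_bool (a1 a4 a1' a4' : bool) (m c l : nat)
  (K : forall b2 b3 : bool, ((a1 && a4) || (a1' && a4')) ==> (b2 && b3) ->
     ((~~a1 && ~~a4) || (~~a1' && ~~a4')) ==> (~~b2 && ~~b3) ->
     l <= m + ((a1 != b2) + ((b2 != b3) + ((b3 != a4) + ((b2 != a1') + ((b3 != a4') + 0))))))
  (Hc : c = m + ((a1 != a4) + ((a1' != a4') + 0))) (Hlt : c < l) :
  (a1 && a4 && ~~a1' && ~~a4') || (~~a1 && ~~a4 && a1' && a4').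
Proof.
move: K Hc; case: a1; case: a4; case: a1'; case: a4' => //= K Hc;
 first [ have := K true true erefl erefl | have := K false false erefl erefl ] => /= H;
 ssrlia.
Qed.

Definition avoid (S : {set gV G'}) : Prop := exists2 D' : {set gE G'}, D' \subset inside S &
      [/\ good D', inr true \notin D' & inr false \notin D'].

Lemma main_spec (l : nat) (Hconn : cyc_edge_conn G l) (Hsize : 2 * l + 2 <= #|gV G|)
  (A' : {set gV G'}) : cyclic_cut A' -> #|cut A'| < l ->
  [/\ l - 2 <= #|cut A'|, (inr true : gE G') \notin cut A' & (inr false : gE G') \notin cut A'].
Proof.
move=> [HA HB] Hlt.
have [D1 HD1 Hg1] := cycle_good HA.
have [D2 HD2 Hg2] := cycle_good HB.
have Hc' := cutG' A'.
have Et : ((inr true : gE G') \in cut A') = ((u1 \in A') != (u4 \in A')) by rewrite in_set.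
have Ef : ((inr false : gE G') \in cut A') = ((u1' \in A') != (u4' \in A')) by rewrite in_set.
have HCS : forall b2 b3, has_cycle_in (liftS A' b2 b3) -> has_cycle_in (liftS (~: A') (~~b2) (~~b3)) ->
    l <= #|cut (liftS A' b2 b3)|.
  move=> b2 b3 H1 H2; apply: Hconn; split => //; by rewrite liftSC.
have K : forall b2 b3 : bool,
    (((u1 \in A') && (u4 \in A')) || ((u1' \in A') && (u4' \in A'))) ==> (b2 && b3) ->
    ((~~(u1 \in A') && ~~(u4 \in A')) || (~~(u1' \in A') && ~~(u4' \in A'))) ==> (~~b2 && ~~b3) ->
    l <= mS A' + (((u1 \in A') != b2) + ((b2 != b3) + ((b3 != (u4 \in A')) +
        ((b2 != (u1' \in A')) + ((b3 != (u4' \in A')) + 0))))).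
  move=> b2 b3 C1 C2; rewrite addnA -cutG; apply: HCS.
  - apply: (lift_cycle HD1 Hg1) => /orP [] H; apply: (implyP C1).
    + by have := subsetP HD1 _ H; rewrite inside_t => ->.
    + by have := subsetP HD1 _ H; rewrite inside_f => ->; rewrite orbT.
  - apply: (lift_cycle HD2 Hg2) => /orP [] H; apply: (implyP C2).
    + by have := subsetP HD2 _ H; rewrite inside_t !in_setC => ->.
    + by have := subsetP HD2 _ H; rewrite inside_f !in_setC => ->; rewrite orbT.
have Hsp := final_bool K Hc' Hlt.
have Hspec : ((u1 \in A') == (u4 \in A')) && ((u1' \in A') == (u4' \in A')).
  by move: Hsp; case: (u1 \in A'); case: (u4 \in A'); case: (u1' \in A'); case: (u4' \in A').
move: Hspec => /andP [/eqP E14 /eqP E14'].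
split; [|by rewrite Et E14 eqxx|by rewrite Ef E14' eqxx].
have Hm2 : forall b, #|cut (liftS A' b b)| = mS A' + 2.
  move=> b; rewrite cutG; move: Hsp; rewrite E14 E14';
  case: (u4 \in A'); case: (u4' \in A'); case: b => //= _; ssrlia.
case: (classic (avoid (~: A'))) => [[D HD [HgD Nt Nf]]|NB].
  have L1 : has_cycle_in (liftS A' true true).
    by apply: (lift_cycle HD1 Hg1).
  have L2 : has_cycle_in (liftS (~: A') false false).
    by apply: (lift_cycle HD HgD) => /orP [] H; [move: Nt|move: Nf]; rewrite H.
  have := HCS true true L1 L2.
  rewrite Hm2 Hc' E14 E14' !eqxx /= => H; ssrlia.
case: (classic (avoid A')) => [[D HD [HgD Nt Nf]]|NA].
  have L1 : has_cycle_in (liftS A' false false).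
    by apply: (lift_cycle HD HgD) => /orP [] H; [move: Nt|move: Nf]; rewrite H.
  have L2 : has_cycle_in (liftS (~: A') true true).
    by apply: (lift_cycle HD2 Hg2).
  have := HCS false false L1 L2.
  rewrite Hm2 Hc' E14 E14' !eqxx /= => H; ssrlia.
exfalso.
have C1 := count_side HA NA.
have C2 := count_side HB NB.
have Hm0 : #|cut (liftS A' false false)| = mS A' + 2.
  by rewrite -(Hm2 false).
have Hm0' : #|cut (liftS (~: A') false false)| = mS A' + 2.
  rewrite cutG mS_C !in_setC; move: Hsp; rewrite E14 E14';
  case: (u4 \in A'); case: (u4' \in A') => //= _; ssrlia.
have Hcard := cardsC A'.
have HG := card_G'.
rewrite Hm0 in C1; rewrite Hm0' in C2.
rewrite Hc' E14 E14' !eqxx /= in Hlt.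
ssrlia.
Qed.

End Spec.

Unset Implicit Arguments.
Set Strict Implicit.

Theorem mainTheorem3 (l : nat) (G : mgraph) (v1 v2 v3 v4 v1' v4' : gV G)
  (Hl : 1 <= l) (Hcub : cubic G) (Hconn : cyc_edge_conn G l)
  (Hsize : 2 * l + 2 <= #|gV G|)
  (* v1 v2 v3 v4 is a path on four distinct vertices *)
  (Huniq : uniq [:: v1; v2; v3; v4])
  (Ha12 : adj v1 v2) (Ha23 : adj v2 v3) (Ha34 : adj v3 v4)
  (* v1' is a neighbor of v2 different from v1, v3 (and from v2) *)
  (Ha1' : adj v2 v1') (Hd1' : v1' != v1)
  (* v4' is a neighbor of v3 different from v2, v4 (and from v3) *)
  (Ha4' : adj v3 v4') (Hd4' : v4' != v4)
  (* the vertices that survive the splitting (redundant with the above) *)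
  (h1 : (v1 != v2) && (v1 != v3)) (h4 : (v4 != v2) && (v4 != v3))
  (h1' : (v1' != v2) && (v1' != v3)) (h4' : (v4' != v2) && (v4' != v3))
  (A' : {set gV (split_off h1 h4 h1' h4')}) :
  cyclic_cut A' -> #|cut A'| < l ->
  [/\ l - 2 <= #|cut A'|,
      new_edge_v1v4 h1 h4 h1' h4' \notin cut A'
    & new_edge_v1'v4' h1 h4 h1' h4' \notin cut A'].
Proof.
move=> Hcyc Hlt.
case: Ha12 => e12 J12; case: Ha23 => e23 J23; case: Ha34 => e34 J34.
case: Ha1' => e21 J21; case: Ha4' => e34' J34'.
exact: (main_spec Hcub Huniq Hd1' Hd4' J12 J23 J34 J21 J34' Hconn Hsize Hcyc Hlt).
Qed.
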